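(* There exists a proper temporal graph $\mathcal G$ whose reachability graph is not isomorphic to the non-strict-journey reachability graph of any simple temporal graph $\mathcal H$. (For instance, $\mathcal G$ the path $a-b-c-d$ with $\lambda(ab)=\{2\}$, $\lambda(bc)=\{1,3\}$, $\lambda(cd)=\{2\}$, whose reachability graph has arcs in both directions between every pair of vertices except $a$ and $d$.)
   Context: A temporal graph is a triple $\mathcal G=(V,E,\lambda)$ where $V$ is a finite vertex set, $E$ is a set of undirected edges on $V$, and $\lambda:E\to 2^{\mathbb N}\setminus\{\emptyset\}$ assigns to each edge a nonempty set of presence times. The footprint of $\mathcal G$ is the static graph $(V,E)$. A contact is a pair $(e,t)$ with $e\in E$ and $t\in\lambda(e)$. A journey from $u$ to $v$ is a sequence of contacts $(e_1,t_1),\dots,(e_k,t_k)$, $k\ge 1$, such that $e_1,\dots,e_k$ form a path from $u$ to $v$ in the footprint and $t_1\le t_2\le\dots\le t_k$ (a non-strict journey); it is strict if $t_1<t_2<\dots<t_k$. $\mathcal G$ is proper if $\lambda(e)\cap\lambda(e')=\emptyset$ for any two distinct edges $e,e'$ sharing an endpoint (in a proper graph every journey is strict); simple if $|\lambda(e)|=1$ for every edge $e$. The reachability graph $\mathcal C(\mathcal G)$ (with respect to a chosen journey notion) is the directed graph on $V$ having an arc $(u,v)$, $u\neq v$, if and only if there is a journey from $u$ to $v$. Reachability graphs are compared up to isomorphism of directed graphs. *)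

(* Defs.v *)
From mathcomp Require Import all_boot.
Set Implicit Arguments. Unset Strict Implicit. Unset Printing Implicit Defensive.

(* A temporal graph on a finite vertex type V: an undirected edge relation
   (the footprint) and, for each edge, a set of presence times (subset of nat). *)
Record tgraph (V : finType) := TGraph {
  tedge : rel V;
  tlab  : V -> V -> nat -> Prop
}.

Definition tgraph_wf (V : finType) (G : tgraph V) : Prop :=
  (forall u v, tedge G u v = tedge G v u) /\
  (forall u, ~~ tedge G u u) /\
  (forall u v t, tlab G u v t <-> tlab G v u t) /\
  (forall u v t, tlab G u v t -> tedge G u v) /\
  (forall u v, tedge G u v -> exists t, tlab G u v t).

Definition tproper (V : finType) (G : tgraph V) : Prop :=
  forall u v w t, tedge G u v -> tedge G u w -> v != w ->
    tlab G u v t -> tlab G u w t -> False.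

Definition tsimple (V : finType) (G : tgraph V) : Prop :=
  forall u v, tedge G u v -> exists! t, tlab G u v t.

(* A sequence of contacts leaving vertex x, each step (y, t) traversing edge
   {x,y} at time t, consecutive times related by cmp (<= or <). *)
Fixpoint contacts_ok (V : finType) (G : tgraph V) (cmp : nat -> nat -> bool)
    (x : V) (t0 : option nat) (s : seq (V * nat)) : Prop :=
  match s with
  | [::] => True
  | (y, t) :: s' =>
      [/\ tedge G x y, tlab G x y t,
          (match t0 with None => True | Some t' => cmp t' t end)
        & contacts_ok G cmp y (Some t) s']
  end.

(* A journey from u to v (k >= 1 contacts whose edges form a path in the
   footprint, i.e. visited vertices pairwise distinct). *)
Definition journey (V : finType) (G : tgraph V) (cmp : nat -> nat -> bool)
    (u v : V) : Prop :=
  exists s : seq (V * nat),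
    [/\ s != [::], uniq (u :: map fst s), last u (map fst s) = v
      & contacts_ok G cmp u None s].

Definition nonstrict_journey V (G : tgraph V) := journey G leq.
Definition strict_journey V (G : tgraph V) := journey G ltn.

Definition reach_nonstrict V (G : tgraph V) (u v : V) : Prop :=
  u != v /\ nonstrict_journey G u v.
Definition reach_strict V (G : tgraph V) (u v : V) : Prop :=
  u != v /\ strict_journey G u v.

Definition digraph_iso (V W : finType) (A : V -> V -> Prop) (B : W -> W -> Prop)
  : Prop :=
  exists f : V -> W, bijective f /\ forall x y, A x y <-> B (f x) (f y).

(* Main.v *)
Require Import Defs.
From mathcomp Require Import all_boot.
From Stdlib Require Import Lia.
From mathcomp Require Import zify.
Set Implicit Arguments. Unset Strict Implicit. Unset Printing Implicit Defensive.

Section HSide.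
Variables (W : finType) (H : tgraph W).
Hypothesis wfH : tgraph_wf H.
Hypothesis simH : tsimple H.

Lemma esym u v : tedge H u v = tedge H v u.
Proof. by case: wfH. Qed.
Lemma eirr u : ~~ tedge H u u.
Proof. by case: wfH => _ []. Qed.
Lemma lsym u v t : tlab H u v t -> tlab H v u t.
Proof. by case: wfH => _ [] _ [] h _ /h. Qed.
Lemma ledge u v t : tlab H u v t -> tedge H u v.
Proof. by case: wfH => _ [] _ [] _ [] h _ /h. Qed.
Lemma lex u v : tedge H u v -> exists t, tlab H u v t.
Proof. by case: wfH => _ [] _ [] _ [] _ h /h. Qed.
Lemma luniq u v t1 t2 : tlab H u v t1 -> tlab H u v t2 -> t1 = t2.
Proof.
move=> h1 h2; have [t [_ ht]] := simH (ledge h1).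
by rewrite -(ht _ h1) -(ht _ h2).
Qed.

Lemma j1 u v t : u != v -> tlab H u v t -> nonstrict_journey H u v.
Proof.
move=> uv l; exists [:: (v, t)]; split => //=.
  by rewrite inE uv.
by split => //; apply: ledge l.
Qed.

Lemma j2 u m v t1 t2 : uniq [:: u; m; v] -> tlab H u m t1 -> tlab H m v t2 ->
  t1 <= t2 -> nonstrict_journey H u v.
Proof.
move=> un l1 l2 le; exists [:: (m, t1); (v, t2)]; split => //=.
by split => //; [apply: ledge l1 | split => //; apply: ledge l2].
Qed.

Lemma first u v : nonstrict_journey H u v -> exists u1, tedge H u u1.
Proof. by case=> [[|[u1 t] s]] [] // _ _ _ [] e; exists u1. Qed.

Variables (x y z w : W).
Hypothesis all : forall v, [\/ v = x, v = y, v = z | v = w].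

Lemma half : x != y -> x != z -> x != w -> y != z -> y != w -> z != w ->
  ~~ tedge H x w -> ~~ tedge H x z -> ~~ tedge H y w -> tedge H x y ->
  nonstrict_journey H x z -> nonstrict_journey H z x ->
  exists q, tlab H x y q /\ tlab H y z q.
Proof.
move=> xy xz xw yz yw zw nxw nxz nyw exy jxz jzx.
have Nx : forall v, tedge H x v -> v = y.
  move=> v e; case: (all v) => ?; subst v; rewrite // ?(negPf (eirr x)) ?(negPf nxz) ?(negPf nxw) // in e.
have Nw : forall v, tedge H w v -> v = z.
  move=> v e; case: (all v) => ?; subst v; rewrite // ?(negPf (eirr w)) // in e.
  - by rewrite esym (negPf nxw) in e.
  - by rewrite esym (negPf nyw) in e.
have [p lp] := lex exy.
case: jxz => [[|[u1 t1] s]] [] // _ + + [] e1 l1 _.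
rewrite (Nx _ e1) in l1 * => {e1 u1}.
case: s => [|[u2 t2] s] /=; first by move=> _ E; rewrite E eqxx in yz.
move=> /andP [U1 /andP [U2 _]] _ [] e2 l2 le12 _.
have xu2 : x != u2 by apply: contra U1 => /eqP <-; rewrite !inE eqxx ?orbT.
have yu2 : y != u2 by apply: contra U2 => /eqP <-; rewrite !inE eqxx ?orbT.
have u2z : u2 = z.
  case: (all u2) xu2 yu2 e2 => ?; subst u2; rewrite ?eqxx //.
  by rewrite (negPf nyw).
rewrite u2z in l2.
case: jzx => [[|[v1 r1] s']] [] // _ + + [] f1 m1 _.
have : v1 = y \/ v1 = w.
  case: (all v1) f1 => ?; subst v1; [by rewrite esym (negPf nxz) | by left | by rewrite (negPf (eirr z)) | by right].
case=> ?; subst v1.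
  case: s' => [|[v2 r2] s'] /=; first by move=> _ E; rewrite E eqxx in xy.
  move=> /andP [V1 /andP [V2 _]] _ [] f2 m2 le' _.
  have zv2 : z != v2 by apply: contra V1 => /eqP <-; rewrite !inE eqxx ?orbT.
  have yv2 : y != v2 by apply: contra V2 => /eqP <-; rewrite !inE eqxx ?orbT.
  have v2x : v2 = x.
    case: (all v2) zv2 yv2 f2 => ?; subst v2; rewrite ?eqxx //.
    by rewrite (negPf nyw).
  rewrite v2x in m2.
  have E1 := luniq (lsym m2) lp.
  have E2 := luniq (lsym m1) l2.
  exists p; split => //.
  have -> : p = t2 by apply/eqP; rewrite eqn_leq; apply/andP; split; [by rewrite -(luniq l1 lp) | by rewrite -E2 -E1].
  done.
case: s' => [|[v2 r2] s'] /=; first by move=> _ E; rewrite E eqxx in xw.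
move=> /andP [V1 _] _ [] f2 _ _ _.
by move: V1; rewrite (Nw _ f2) !inE eqxx ?orbT.
Qed.

End HSide.

Lemma eq_sym_neq (T : eqType) (a b : T) : a != b -> b != a.
Proof. by rewrite eq_sym. Qed.

Lemma j3 (W : finType) (H : tgraph W) (wfH : tgraph_wf H) u a b v t :
  uniq [:: u; a; b; v] -> tlab H u a t -> tlab H a b t -> tlab H b v t ->
  nonstrict_journey H u v.
Proof.
move=> un l1 l2 l3; exists [:: (a, t); (b, t); (v, t)]; split => //=.
have e1 := ledge wfH l1; have e2 := ledge wfH l2; have e3 := ledge wfH l3.
by do !split.
Qed.

Lemma Hcore (W : finType) (H : tgraph W) (wfH : tgraph_wf H) (simH : tsimple H)
  (x y z w : W) (all : forall v, [\/ v = x, v = y, v = z | v = w]) :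
  x != y -> x != z -> x != w -> y != z -> y != w -> z != w ->
  ~~ tedge H x w -> ~~ tedge H x z -> ~~ tedge H y w -> tedge H x y -> tedge H w z ->
  nonstrict_journey H x z -> nonstrict_journey H z x ->
  nonstrict_journey H w y -> nonstrict_journey H y w ->
  ~ nonstrict_journey H x w -> False.
Proof.
move=> xy xz xw yz yw zw nxw nxz nyw exy ewz jxz jzx jwy jyw.
have [q [l1 l2]] := half wfH simH all xy xz xw yz yw zw nxw nxz nyw exy jxz jzx.
have all' : forall v, [\/ v = w, v = z, v = y | v = x].
  by move=> v; case: (all v) => ->; [apply: Or44 | apply: Or43 | apply: Or42 | apply: Or41].
have nwx : ~~ tedge H w x by rewrite (esym wfH) nxw.
have nwy : ~~ tedge H w y by rewrite (esym wfH) nyw.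
have nzx : ~~ tedge H z x by rewrite (esym wfH) nxz.
have [r [l3 l4]] := half wfH simH all'
  (eq_sym_neq zw) (eq_sym_neq yw) (eq_sym_neq xw) (eq_sym_neq yz) (eq_sym_neq xz) (eq_sym_neq xy) nwx nwy nzx ewz jwy jyw.
have rq : r = q := luniq wfH simH (lsym wfH l4) l2.
rewrite rq in l3 => J; apply: J.
apply: (j3 wfH _ l1 l2 (lsym wfH l3)).
by rewrite /= !inE !negb_or xy xz xw yz yw zw.
Qed.

Lemma Hmain (W : finType) (H : tgraph W) (wfH : tgraph_wf H) (simH : tsimple H)
  (x y z w : W) (all : forall v, [\/ v = x, v = y, v = z | v = w]) :
  x != y -> x != z -> x != w -> y != z -> y != w -> z != w ->
  nonstrict_journey H x y -> nonstrict_journey H y x ->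
  nonstrict_journey H x z -> nonstrict_journey H z x ->
  nonstrict_journey H w y -> nonstrict_journey H y w ->
  nonstrict_journey H w z -> nonstrict_journey H z w ->
  ~ nonstrict_journey H x w -> ~ nonstrict_journey H w x -> False.
Proof.
move=> xy xz xw yz yw zw jxy jyx jxz jzx jwy jyw jwz jzw nxw' nwx'.
have nxw : ~~ tedge H x w.
  by apply/negP => e; have [t l] := lex wfH e; exact: nxw' (j1 wfH xw l).
have ncom u : tedge H x u -> tedge H w u -> False.
  move=> e1 e2.
  have ux : x != u by apply/eqP => E; rewrite -E (negPf (eirr wfH x)) in e1.
  have uw : w != u by apply/eqP => E; rewrite -E (negPf (eirr wfH w)) in e2.
  have [t1 l1] := lex wfH e1; have [t2 l2] := lex wfH e2.
  case: (leqP t1 t2) => le.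
    apply: nxw'; apply: (j2 wfH _ l1 (lsym wfH l2) le).
    by rewrite /= !inE !negb_or ux xw eq_sym uw.
  apply: nwx'; apply: (j2 wfH _ l2 (lsym wfH l1) (ltnW le)).
  by rewrite /= !inE !negb_or uw eq_sym xw eq_sym ux.
have Nx u : tedge H x u -> u = y \/ u = z.
  move=> e; case: (all u) e => -> e; [by rewrite (negPf (eirr wfH x)) in e|by left|by right|by rewrite (negPf nxw) in e].
have Nw u : tedge H w u -> u = y \/ u = z.
  move=> e; case: (all u) e => -> e; [by rewrite (esym wfH) (negPf nxw) in e|by left|by right|by rewrite (negPf (eirr wfH w)) in e].
have [u1 e1] := first jxy; have [u2 e2] := first jwy.
case: (Nx _ e1) => ?; subst u1.
- have nwy : ~~ tedge H w y by apply/negP => /(ncom _ e1).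
  have ewz : tedge H w z by case: (Nw _ e2) => ?; subst u2 => //; rewrite e2 in nwy.
  have nxz : ~~ tedge H x z by apply/negP => /ncom /(_ ewz).
  apply: (Hcore wfH simH all xy xz xw yz yw zw nxw nxz _ e1 ewz jxz jzx jwy jyw nxw').
  by rewrite (esym wfH).
- have nwz : ~~ tedge H w z by apply/negP => /(ncom _ e1).
  have ewy : tedge H w y by case: (Nw _ e2) => ?; subst u2 => //; rewrite e2 in nwz.
  have nxy : ~~ tedge H x y by apply/negP => /ncom /(_ ewy).
  have all' : forall v, [\/ v = x, v = z, v = y | v = w].
    by move=> v; case: (all v) => ->; [apply: Or41 | apply: Or43 | apply: Or42 | apply: Or44].
  apply: (Hcore wfH simH all' xz xy xw (eq_sym_neq yz) zw yw nxw nxy _ e1 ewy jxy jyx jwz jzw nxw').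
  by rewrite (esym wfH).
Qed.

Definition gedge : rel 'I_4 := fun u v => (u.+1 == v :> nat) || (v.+1 == u :> nat).
Definition glab (u v : 'I_4) (t : nat) : Prop :=
  gedge u v /\ (if minn u v == 1 then t = 1 \/ t = 3 else t = 2).
Definition G4 : tgraph 'I_4 := TGraph gedge glab.

Definition oa : 'I_4 := @Ordinal 4 0 isT.
Definition ob : 'I_4 := @Ordinal 4 1 isT.
Definition oc : 'I_4 := @Ordinal 4 2 isT.
Definition od : 'I_4 := @Ordinal 4 3 isT.

Lemma G4wf : tgraph_wf G4.
Proof.
split; [|split; [|split; [|split]]] => /=.
- by move=> u v; rewrite /gedge orbC.
- by move=> [[|[|[|[|?]]]] ?].
- by move=> u v t; rewrite /glab /gedge orbC minnC.
- by move=> u v t [].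
- move=> [[|[|[|[|?]]]] ?] // [[|[|[|[|?]]]] ?] //= _; rewrite /glab /=;
  by [exists 2 | exists 1; split => //; left].
Qed.

Lemma G4proper : tproper G4.
Proof.
move=> u v w t.
case: u => [[|[|[|[|?]]]] ?] //; case: v => [[|[|[|[|?]]]] ?] //;
case: w => [[|[|[|[|?]]]] ?] //= _ _ _; rewrite /glab /=; intuition lia.
Qed.

Ltac solveJ := repeat (match goal with
  | |- glab _ _ _ => rewrite /glab /= /minn /=
  | |- context [minn _ _] => rewrite /minn /=
  | |- _ \/ _ => first [by left | by right]
  | |- _ => first [done | split] end).

Lemma Jab : reach_strict G4 oa ob. Proof. by split => //; exists [:: (ob, 2)]; solveJ. Qed.
Lemma Jba : reach_strict G4 ob oa. Proof. by split => //; exists [:: (oa, 2)]; solveJ. Qed.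
Lemma Jac : reach_strict G4 oa oc. Proof. by split => //; exists [:: (ob, 2); (oc, 3)]; solveJ. Qed.
Lemma Jca : reach_strict G4 oc oa. Proof. by split => //; exists [:: (ob, 1); (oa, 2)]; solveJ. Qed.
Lemma Jdb : reach_strict G4 od ob. Proof. by split => //; exists [:: (oc, 2); (ob, 3)]; solveJ. Qed.
Lemma Jbd : reach_strict G4 ob od. Proof. by split => //; exists [:: (oc, 1); (od, 2)]; solveJ. Qed.
Lemma Jdc : reach_strict G4 od oc. Proof. by split => //; exists [:: (oc, 2)]; solveJ. Qed.
Lemma Jcd : reach_strict G4 oc od. Proof. by split => //; exists [:: (od, 2)]; solveJ. Qed.

Lemma nJad : ~ strict_journey G4 oa od.
Proof.
case=> [[|[v1 t1] [|[v2 t2] [|[v3 t3] s]]]] [] //=.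
all: case: v1 => [[|[|[|[|?]]]] ?] //=.
all: try (case: v2 => [[|[|[|[|?]]]] ?] //=).
all: try (case: v3 => [[|[|[|[|?]]]] ?] //=).
all: rewrite /glab /minn /=.
all: move=> _ U L C.
all: try (have := f_equal val L => /= ?; done).
all: move: C U; rewrite /gedge /= => C U.
all: repeat match goal with H : [/\ _, _, _ & _] |- _ => destruct H end.
all: intuition (try lia; try discriminate).
all: try (by rewrite ?andbF ?andFb in U).
Qed.

Lemma nJda : ~ strict_journey G4 od oa.
Proof.
case=> [[|[v1 t1] [|[v2 t2] [|[v3 t3] s]]]] [] //=.
all: case: v1 => [[|[|[|[|?]]]] ?] //=.
all: try (case: v2 => [[|[|[|[|?]]]] ?] //=).
all: try (case: v3 => [[|[|[|[|?]]]] ?] //=).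
all: rewrite /glab /minn /=.
all: move=> _ U L C.
all: try (have := f_equal val L => /= ?; done).
all: move: C U; rewrite /gedge /= => C U.
all: repeat match goal with H : [/\ _, _, _ & _] |- _ => destruct H end.
all: intuition (try lia; try discriminate).
all: try (by rewrite ?andbF ?andFb in U).
Qed.

Theorem mainTheorem5 :
  exists (V : finType) (G : tgraph V),
    [/\ tgraph_wf G, tproper G &
      forall (W : finType) (H : tgraph W), tgraph_wf H -> tsimple H ->
        ~ digraph_iso (@reach_strict V G) (@reach_nonstrict W H)].
Proof.
exists 'I_4, G4; split; [exact: G4wf | exact: G4proper |].
move=> W H wfH simH [f [[g fg gf] iff]].
have finj := can_inj fg.
have ne u v : u != v -> f u != f v by rewrite (inj_eq finj).
have J u v : reach_strict G4 u v -> nonstrict_journey H (f u) (f v).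
  by move=> r; case: ((iff u v).1 r).
have NJ u v : u != v -> ~ strict_journey G4 u v -> ~ nonstrict_journey H (f u) (f v).
  by move=> uv nj j; have [_ /nj] := (iff u v).2 (conj (ne _ _ uv) j).
apply: (Hmain wfH simH (x := f oa) (y := f ob) (z := f oc) (w := f od)).
- move=> v; rewrite -(gf v); case: (g v) => [[|[|[|[|//]]]] p].
  + by apply: Or41; congr f; apply: val_inj.
  + by apply: Or42; congr f; apply: val_inj.
  + by apply: Or43; congr f; apply: val_inj.
  + by apply: Or44; congr f; apply: val_inj.
all: try by apply: ne.
- exact: J Jab.
- exact: J Jba.
- exact: J Jac.
- exact: J Jca.
- exact: J Jdb.
- exact: J Jbd.
- exact: J Jdc.
- exact: J Jcd.
- by apply: NJ => //; exact: nJad.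
- by apply: NJ => //; exact: nJda.
Qed.
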